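(* Let $\phi:[0,1]\to[0,1]$ be concave, $\phi(0)=0$, $\phi(1)=1$, continuous at $0$, with right derivative $\phi'(0)=\infty$. Then the Marcinkiewicz norm $\|\cdot\|_{M_\phi}$ is equivalent to the positive translation equivariant Marcinkiewicz norm $\|\cdot\|_{TM_\phi}$, even though \[ C:=\sup_{t\in(0,1)}\ \inf_{t'\in(0,1]}\ \sup_{0<\alpha\le1}\frac{\phi_{TM,t}(\alpha)}{\phi_{M,t'}(\alpha)}=\infty, \] where $\phi_{TM,t}(x)=\phi(t)x/t$ for $x\le t$ and $\phi_{TM,t}(x)=\frac{1-\phi(t)}{1-t}x+\frac{\phi(t)-t}{1-t}$ for $x>t$, and $\phi_{M,t'}(x)=\phi(t')x/t'$ for $x\le t'$ and $\phi_{M,t'}(x)=\phi(t')$ for $x>t'$.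
   Context: $\Omega=[0,1]$ with Lebesgue measure $\mu$; $X^*(\omega)=\inf\{\lambda\ge0:\mu\{|X|>\lambda\}\le\omega\}$. Marcinkiewicz norm $\|X\|_{M_\phi}=\sup_{0<t\le1}\frac{\phi(t)}{t}\int_0^tX^*\,d\omega$; positive translation equivariant Marcinkiewicz norm $\|X\|_{TM_\phi}=\sup_{0<t<1}\{\frac{\phi(t)}{t}\int_0^tX^*\,d\omega+\frac{\phi(t)-1}{t-1}\int_t^1X^*\,d\omega\}$. Two norms are equivalent if the sets of functions on which they are finite coincide and they are bounded by constant multiples of each other there. *)

(* Defs.v *)
From HB Require Import structures.
From mathcomp Require Import all_boot all_order all_algebra.
From mathcomp Require Import all_classical all_reals all_analysis.
Set Implicit Arguments. Unset Strict Implicit. Unset Printing Implicit Defensive.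
Import Order.TTheory GRing.Theory Num.Theory.
Import numFieldNormedType.Exports.
Local Open Scope classical_set_scope.
Local Open Scope ring_scope.

Section Defs.
Variable R : realType.
Local Notation mu := (@lebesgue_measure R).

Definition distrib (X : R -> R) (lam : R) : \bar R :=
  mu [set w | w \in `[0, 1] /\ lam < `|X w|].

Definition decr_rearr (X : R -> R) (w : R) : \bar R :=
  ereal_inf [set lam%:E | lam in [set lam : R | 0 <= lam /\ (distrib X lam <= w%:E)%E]].

Definition int_rearr (X : R -> R) (a b : R) : \bar R :=
  (\int[mu]_(w in `[a, b]) decr_rearr X w)%E.

Definition M_norm (phi : R -> R) (X : R -> R) : \bar R :=
  ereal_sup [set ((phi t / t)%:E * int_rearr X 0 t)%E | t in `]0, 1]].

Definition TM_norm (phi : R -> R) (X : R -> R) : \bar R :=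
  ereal_sup [set ((phi t / t)%:E * int_rearr X 0 t
                  + ((phi t - 1) / (t - 1))%:E * int_rearr X t 1)%E | t in `]0, 1[].

Definition equiv_norms (N1 N2 : (R -> R) -> \bar R) : Prop :=
  exists c1 c2 : R, 0 < c1 /\ 0 < c2 /\
    forall X : R -> R, measurable_fun (`[0, 1] : set R) X ->
      ((N1 X < +oo)%E <-> (N2 X < +oo)%E) /\
      ((N1 X < +oo)%E -> (N1 X <= c1%:E * N2 X)%E /\ (N2 X <= c2%:E * N1 X)%E).

Definition phi_TM (phi : R -> R) (t x : R) : R :=
  if x <= t then phi t * x / t
  else (1 - phi t) / (1 - t) * x + (phi t - t) / (1 - t).

Definition phi_M (phi : R -> R) (t' x : R) : R :=
  if x <= t' then phi t' * x / t' else phi t'.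

Definition C_const (phi : R -> R) : \bar R :=
  ereal_sup [set ereal_inf [set ereal_sup
      [set (phi_TM phi t a / phi_M phi t' a)%:E | a in `]0, 1]]
    | t' in `]0, 1]] | t in `]0, 1[].

Definition concave_on01 (phi : R -> R) : Prop :=
  forall x y a : R, x \in `[0, 1] -> y \in `[0, 1] -> a \in `[0, 1] ->
    a * phi x + (1 - a) * phi y <= phi (a * x + (1 - a) * y).

End Defs.

(* Main.v *)
Require Import Defs.
From HB Require Import structures.
From mathcomp Require Import all_boot all_order all_algebra.
From mathcomp Require Import all_classical all_reals all_analysis.
From mathcomp Require Import measurable_realfun.
From mathcomp Require Import ring lra.
Import Order.TTheory GRing.Theory Num.Theory.
Import numFieldNormedType.Exports.
Local Open Scope classical_set_scope.
Local Open Scope ring_scope.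

Section S.
Variable R : realType.

Lemma noninc_emeas (D : set R) (f : R -> \bar R) : measurable D ->
  (forall x y : R, x <= y -> (f y <= f x)%E) -> measurable_fun D f.
Proof.
move=> mD f_ni.
move=> _; apply: (measurability _ (ErealGenCInfty.measurableE R)) => //.
move=> _ [_ [r ->] <-].
apply: measurableI => //; apply: is_interval_measurable => s t/=.
rewrite !in_itv/= !andbT => fs ft u /andP[su ut].
by rewrite in_itv/= andbT (le_trans ft)// f_ni.
Qed.

Lemma rearr_ge0 (X : R -> R) (w : R) : (0 <= decr_rearr X w)%E.
Proof.
apply: le_ereal_inf_tmp => _ [l [l0 _] <-]; by rewrite lee_fin.
Qed.

Lemma rearr_noninc (X : R -> R) : forall x y : R, x <= y -> (decr_rearr X y <= decr_rearr X x)%E.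
Proof.
move=> x y xy; apply: ereal_inf_le_tmp => _ [l [l0 hl] <-]; exists l => //; split => //.
by apply: (le_trans hl); rewrite lee_fin.
Qed.
Local Notation mu := (@lebesgue_measure R).
Local Open Scope ereal_scope.

Lemma rearr_meas (X : R -> R) (D : set R) : measurable D -> measurable_fun D (decr_rearr X).
Proof. move=> mD; apply: noninc_emeas => //; exact: rearr_noninc. Qed.

Lemma I_ge0 (X : R -> R) a b : 0 <= int_rearr X a b.
Proof. by apply: integral_ge0 => x _; exact: rearr_ge0. Qed.

Lemma I_split (X : R -> R) (t : R) : (0 <= t <= 1)%R ->
  int_rearr X 0 1 = int_rearr X 0 t + int_rearr X t 1.
Proof.
move=> /andP[t0 t1].
rewrite /int_rearr [X in \int[_]_(_ in X) _ = _](_ : _ = `[0%R, t]%classic `|` `]t, 1%R]%classic); last first.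
  apply/seteqP; split => x /=; rewrite ?in_itv /= ?andbT.
    move=> /andP[x0 x1]; case: (leP x t) => xt; [left|right]; rewrite ?in_itv /= ?andbT; try (apply/andP; split); lra.
  by case => /andP[] ?? ; apply/andP; split; lra.
rewrite ge0_integral_setU //.
- congr (_ + _); rewrite integral_itv_obnd_cbnd //; exact: rearr_meas.
- by apply: rearr_meas; apply: measurableU.
- by move=> x _; exact: rearr_ge0.
- rewrite disj_set2E; apply/eqP/seteqP; split => x //=; rewrite !in_itv/= => -[/andP[_ ?] /andP[? _]]; lra.
Qed.


Lemma I_lo (X : R -> R) (t : R) : (0 <= t)%R ->
  t%:E * decr_rearr X t <= int_rearr X 0 t.
Proof.
move=> t0; rewrite /int_rearr.
have -> : t%:E * decr_rearr X t = \int[mu]_(w in `[0%R, t]) (cst (decr_rearr X t)) w.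
  rewrite integral_cst //= lebesgue_measure_itv /= lte_fin.
  case: ifPn => [_|]; first by rewrite oppr0 adde0 muleC.
  rewrite -leNgt => t0'; have -> : t = 0%R by apply/le_anti/andP.
  by rewrite mul0e mule0.
apply: ge0_le_integral => //.
- by move=> x _; exact: rearr_ge0.
- exact: rearr_meas.
- move=> x; rewrite /= in_itv /= => /andP[_ xt]; exact: rearr_noninc.
Qed.

Lemma I_hi (X : R -> R) (t : R) : (t <= 1)%R ->
  int_rearr X t 1 <= (1 - t)%:E * decr_rearr X t.
Proof.
move=> t1; rewrite /int_rearr.
have -> : (1 - t)%:E * decr_rearr X t = \int[mu]_(w in `[t, 1%R]) (cst (decr_rearr X t)) w.
  rewrite integral_cst //= lebesgue_measure_itv /= lte_fin.
  case: ifPn => [_|]; first by rewrite muleC EFinB.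
  rewrite -leNgt => t0'; have -> : t = 1%R by apply/le_anti/andP.
  by rewrite subrr mul0e mule0.
apply: ge0_le_integral => //.
- by move=> x _; exact: rearr_ge0.
- exact: rearr_meas.

- move=> x; rewrite /= in_itv /= => /andP[tx _]; exact: rearr_noninc.
Qed.

Section Phi.
Variable phi : R -> R.
Hypothesis Hr : forall x : R, x \in `[0%R, 1%R] -> phi x \in `[0%R, 1%R].
Hypothesis Hc : concave_on01 phi.
Hypothesis h0 : phi 0%R = 0%R.
Hypothesis h1 : phi 1%R = 1%R.

Lemma phi_ge x : (0 <= x <= 1)%R -> (x <= phi x)%R.
Proof.
move=> x01.
have := Hc 1%R 0%R x; rewrite h0 h1 !mulr1 !mulr0 !addr0; apply.
- by rewrite in_itv /= ler01 lexx.
- by rewrite in_itv /= ler01 lexx.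
- by rewrite in_itv /=.
Qed.

Lemma phi_le1 x : (0 <= x <= 1)%R -> (phi x <= 1)%R.
Proof.
move=> x01; have := Hr x; rewrite !in_itv /= => /(_ x01) /andP[].
done.
Qed.

Lemma wgt_eq t : ((phi t - 1) / (t - 1) = (1 - phi t) / (1 - t))%R.
Proof. by rewrite -[(phi t - 1)%R]opprB -[(t - 1)%R]opprB invrN mulrNN. Qed.

Lemma wgt_ge0 t : (0 <= t < 1)%R -> (0 <= (phi t - 1) / (t - 1))%R.
Proof.
move=> /andP[t0 t1]; rewrite wgt_eq divr_ge0 //; rewrite subr_ge0 ?phi_le1 ?t0 ?ltW //.
Qed.

Lemma wgt_le1 t : (0 <= t < 1)%R -> ((phi t - 1) / (t - 1) <= 1)%R.
Proof.
move=> /andP[t0 t1]; rewrite wgt_eq ler_pdivrMr ?subr_gt0 // mul1r.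
by rewrite lerB // phi_ge // t0 ltW.
Qed.

Lemma ratio_ge1 t : (0 < t <= 1)%R -> (1 <= phi t / t)%R.
Proof.
move=> /andP[t0 t1]; rewrite ler_pdivlMr // mul1r phi_ge // t1 ltW //.
Qed.


Lemma TM_ge_term (X : R -> R) t : (0 < t < 1)%R ->
  (phi t / t)%:E * int_rearr X 0 t <= TM_norm phi X.
Proof.
move=> /andP[t0 t1].
apply: le_trans (ereal_sup_ubound _); last first.
  by exists t; [rewrite /= in_itv /= t0 t1|reflexivity].
apply: leeDl; apply: mule_ge0; last exact: I_ge0.
by rewrite lee_fin wgt_ge0 // ltW // t0.
Qed.

Lemma I01_le_TM (X : R -> R) : int_rearr X 0 1 <= TM_norm phi X.
Proof.
apply/lee_mul01Pr; first exact: I_ge0.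
move=> r /andP[r0 r1].
have := @TM_ge_term X r; rewrite r0 r1 => /(_ isT) H; apply: le_trans H.
apply: le_trans (lee_pemull (I_ge0 _ _ _) _); last by rewrite lee_fin ratio_ge1 // r0 ltW.
rewrite (@I_split X r); last by rewrite !ltW.
rewrite ge0_muleDr; [|exact: I_ge0|exact: I_ge0].
have r0' : 0 <= r%:E by rewrite lee_fin ltW.
have r1' : 0 <= (1 - r)%:E by rewrite lee_fin subr_ge0 ltW.
have e1 := lee_wpmul2l r0' (@I_hi X r (ltW r1)).
have e3 := lee_wpmul2l r1' (@I_lo X r (ltW r0)).
apply: le_trans (leeD2l _ e1) _.
rewrite muleCA.
apply: le_trans (leeD2l _ e3) _.
rewrite -ge0_muleDl; [|by rewrite lee_fin ltW|by rewrite lee_fin subr_ge0 ltW].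
by rewrite -EFinD addrC subrK mul1e.
Qed.

Lemma M_le_TM (X : R -> R) : M_norm phi X <= TM_norm phi X.
Proof.
apply: ge_ereal_sup => _ [t t01 <-].
move: t01; rewrite /= in_itv /= => /andP[t0 t1].
have [->|tlt1] := eqVneq t 1%R.
  by rewrite h1 divr1 mul1e; exact: I01_le_TM.
by apply: TM_ge_term; rewrite t0 lt_neqAle tlt1 t1.
Qed.

Lemma I01_le_M (X : R -> R) : int_rearr X 0 1 <= M_norm phi X.
Proof.
apply: le_trans (ereal_sup_ubound _); last first.
  by exists 1%R; [rewrite /= in_itv /= ltr01 lexx|reflexivity].
by rewrite h1 divr1 mul1e.
Qed.

Lemma TM_le_MM (X : R -> R) : TM_norm phi X <= M_norm phi X + M_norm phi X.
Proof.
apply: ge_ereal_sup => _ [t t01 <-].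
move: t01; rewrite /= in_itv /= => /andP[t0 t1].
apply: leeD.
  apply: ereal_sup_ubound.
  by exists t; [rewrite /= in_itv /= t0 ltW|reflexivity].
apply: le_trans (I01_le_M X).
apply: le_trans (gee_pMl _ (I_ge0 _ _ _) _) _ => //.
  by rewrite lee_fin wgt_le1 // ltW // t0.
rewrite (@I_split X t); last by rewrite !ltW.
by apply: leeDr; exact: I_ge0.
Qed.


Lemma phi_mono x y : (0 <= x)%R -> (x <= y)%R -> (y <= 1)%R -> (phi x <= phi y)%R.
Proof.
move=> x0 xy y1.
have [x1|x1] := eqVneq x 1%R.
  have -> : y = 1%R by apply/le_anti; rewrite y1 -x1 xy.
  by rewrite x1.
have x1' : (x < 1)%R by rewrite lt_neqAle x1 /= (le_trans xy y1).
have d0 : (0 < 1 - x)%R by rewrite subr_gt0.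
set a := ((1 - y) / (1 - x))%R.
have a0 : (0 <= a)%R by rewrite /a divr_ge0 // ?subr_ge0 // ltW.
have a1 : (a <= 1)%R by rewrite /a ler_pdivrMr // mul1r lerB.
have ya : (a * x + (1 - a) * 1 = y)%R.
  rewrite /a; field; lra.
have key : (a * phi x + (1 - a) * 1 <= phi y)%R.
  have := Hc x 1%R a; rewrite h1 ya; apply.
  - by rewrite in_itv /= x0 (le_trans xy y1).
  - by rewrite in_itv /= ler01 lexx.
  - by rewrite in_itv /= a0 a1.
have p1 : (phi x <= 1)%R by apply: phi_le1; rewrite x0 ltW.
nra.
Qed.


Local Close Scope ereal_scope.
Lemma C_big (hcont : phi x @[x --> 0^'+] --> phi 0)
  (hder : (phi h - phi 0) / h @[h --> 0^'+] --> +oo) (Mr : R) :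
  (1 < Mr)%R -> exists2 t, (0 < t < 1)%R &
   forall t', (0 < t' <= 1)%R ->
   exists2 a, (0 < a <= 1)%R & (Mr <= phi_TM phi t a / phi_M phi t' a)%R.
Proof.
move=> M1.
have M0 : (0 < Mr)%R by lra.
have iM0 : (0 < 1 / Mr)%R by rewrite divr_gt0.
have [s [s0 s1 ps]] : exists s, [/\ (0 < s)%R, (s < 1)%R & (phi s < 1 / Mr)%R].
  have F : \forall x \near 0^'+, [/\ (0 < x)%R, (x < 1)%R & (phi x < 1 / Mr)%R].
    near=> x; split.
    - by near: x; exact: nbhs_right_gt.
    - by near: x; apply: nbhs_right_lt; exact: ltr01.
    - near: x; apply: (cvgr_lt (phi 0) hcont); by rewrite h0.
  by have [x Px] := filter_ex F; exists x.
have [t [t0 t1 ts pt]] : exists t, [/\ (0 < t)%R, (t < 1)%R, (t <= s)%R &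
    (Mr / s <= (phi t - phi 0) / t)%R].
  have F : \forall x \near 0^'+, [/\ (0 < x)%R, (x < 1)%R, (x <= s)%R &
      (Mr / s <= (phi x - phi 0) / x)%R].
    near=> x; split.
    - by near: x; exact: nbhs_right_gt.
    - by near: x; apply: nbhs_right_lt; exact: ltr01.
    - by near: x; apply: nbhs_right_le.
    - by near: x; move/cvgryPge : hder; apply.
  by have [x Px] := filter_ex F; exists x.
rewrite h0 subr0 in pt.
exists t; first by rewrite t0 t1.
move=> t' /andP[t'0 t'1].
have pt'0 : (0 < phi t')%R by apply: (lt_le_trans t'0); apply: phi_ge; rewrite ltW // t'1.
have [pt'M|pt'M] := leP (phi t') (1 / Mr).
  have t'lt1 : (t' < 1)%R.
    rewrite lt_neqAle t'1 andbT; apply/eqP => e; move: pt'M; rewrite e h1.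
    rewrite ler_pdivlMr //; lra.
  exists 1%R; first by rewrite ltr01 lexx.
  have e1 : (1 <= t) = false by rewrite leNgt t1.
  have e2 : (1 <= t') = false by rewrite leNgt t'lt1.
  rewrite /phi_TM /phi_M e1 e2.
  have -> : ((1 - phi t) / (1 - t) * 1 + (phi t - t) / (1 - t) = 1)%R.
    by field; lra.
  rewrite ler_pdivlMr //.
  move: pt'M; rewrite ler_pdivlMr //; lra.
have st' : (s < t')%R.
  rewrite ltNge; apply/negP => t's.
  have := @phi_mono t' s (ltW t'0) t's (ltW s1); lra.
exists t; first by rewrite t0 ltW.
rewrite /phi_TM /phi_M lexx (le_trans ts (ltW st')) mulfK ?gt_eqF //.
have pt'1 : (phi t' <= 1)%R by apply: phi_le1; rewrite ltW // t'1.
have den0 : (0 < phi t' * t / t')%R by apply: divr_gt0 => //; apply: mulr_gt0.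
rewrite ler_pdivlMr //.
have A1 : (phi t' * t / t' <= t / t')%R.
  by rewrite -mulrA; apply: ler_piMl => //; apply: divr_ge0; apply: ltW.
have A2 : (t / t' <= t / s)%R.
  by rewrite ler_pM2l // lef_pV2 ?posrE // ltW.
have A := le_trans A1 A2.
move: pt; rewrite ler_pdivrMr // => pt.
have B : (Mr * (phi t' * t / t') <= Mr * (t / s))%R by apply: ler_wpM2l; [lra|exact: A].
apply: (le_trans B).
rewrite mulrA ler_pdivrMr //.
have E : phi t = (phi t / t * t)%R by rewrite divfK // gt_eqF.
rewrite [X in (_ <= X * _)%R]E.
move: pt; set u := (phi t / t)%R => pt; nra.
Unshelve. all: by end_near.
Qed.

End Phi.
End S.

Local Close Scope ereal_scope.

Theorem theorem30 (R : realType) (phi : R -> R) :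
  (forall x : R, x \in `[0, 1] -> phi x \in `[0, 1]) ->
  concave_on01 phi ->
  phi 0 = 0 -> phi 1 = 1 ->
  phi x @[x --> 0^'+] --> phi 0 ->
  (phi h - phi 0) / h @[h --> 0^'+] --> +oo ->
  equiv_norms (M_norm phi) (TM_norm phi) /\ C_const phi = +oo%E.
Proof.
move=> Hr Hc h0 h1 hcont hder; split.
- exists 1%R, 2%R; split => //; split => //.
  move=> X _.
  have A := @M_le_TM _ _ Hr Hc h0 h1 X.
  have B := @TM_le_MM _ _ Hc h0 h1 X.
  split.
  + split => h.
    * by apply: le_lt_trans B _; exact: lte_add_pinfty.
    * exact: le_lt_trans A h.
  + move=> h; split; first by rewrite mul1e.
    apply: (le_trans B).
    have -> : (2%:E : \bar R) = (1 + 1)%E by rewrite -EFinD.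
    by rewrite ge0_muleDl // mul1e.
- have H : forall r : R, (r%:E <= C_const phi)%E.
    move=> r.
    have M1 : (1 < Num.max r 2)%R by rewrite lt_max ltr1n orbT.
    have [t t01 ht] := @C_big _ _ Hr Hc h0 h1 hcont hder _ M1.
    apply: le_trans (ereal_sup_ubound _); last first.
      by exists t; [rewrite /= in_itv /=|reflexivity].
    apply: le_ereal_inf_tmp => _ [t' t'01 <-].
    move: t'01; rewrite /= in_itv /= => t'01.
    have [a a01 ha] := ht t' t'01.
    apply: le_trans (ereal_sup_ubound _); last first.
      by exists a; [rewrite /= in_itv /=|reflexivity].
    by rewrite lee_fin (le_trans _ ha) // le_max lexx.
  case E : (C_const phi) => [c| |] //.
  + have := H (c + 1)%R; rewrite E lee_fin => Hc1; exfalso; lra.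
  + by have := H 0%R; rewrite E.
Qed.
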